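(* Let $\varphi\in\Delta_1^m$ and let $\mathcal{R}^{\mathrm{use}}_\varphi=\{p\in\mathcal{P}:\exists f\in\mathcal{W}^\varphi \text{ with } f_p>0\}$. Then: (1) there exists $f^\varphi\in\mathcal{W}^\varphi$ with $f^\varphi_p>0$ for all $p\in\mathcal{R}^{\mathrm{use}}_\varphi$; (2) for every $p\in\mathcal{P}$, $p\in\mathcal{R}^{\mathrm{use}}_\varphi$ if and only if $f^\varphi_{e_k}>0$ for all edges $e_k\in p$.
   Context: Let $\mathcal{G}=(\mathcal{V},\mathcal{E})$ be a finite directed graph with an origin $v_o$ and a destination $v_d$, and let $\mathcal{P}$ be the (finite) set of acyclic directed paths from $v_o$ to $v_d$, $n=|\mathcal{P}|$. The set of feasible path-flows is $\mathcal{H}=\{f\in\mathbb{R}^n_{\ge0}:\sum_{p\in\mathcal{P}}f_p=1\}$. For a path-flow $f$, the flow on edge $e_k$ is $f_{e_k}=\sum_{p\ni e_k}f_p$. There is a finite set of states $\Theta=\{\theta_1,\dots,\theta_m\}$; in each state $\theta_s$ each edge $e_k$ has a known cost function $C^{\theta_s}_{e_k}:\mathbb{R}_{\ge0}\to\mathbb{R}_{\ge0}$ that is continuous and strictly increasing. The cost of path $p$ in state $\theta_s$ is $C^{\theta_s}_p(f)=\sum_{e_k\in p}C^{\theta_s}_{e_k}(f_{e_k})$. For $\varphi\in\Delta_1^m:=\{x\in\mathbb{R}^m_{\ge0}:\sum_i x_i=1\}$ the expected costs are $C^\varphi_p(f)=\sum_{s}\varphi_sC^{\theta_s}_p(f)$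 and $C^\varphi_{e_k}(x)=\sum_s\varphi_sC^{\theta_s}_{e_k}(x)$. A flow $f\in\mathcal{H}$ is a $\varphi$-based Wardrop equilibrium ($\varphi$-WE) if for all $p\in\mathcal{P}$ with $f_p>0$ we have $C^\varphi_p(f)\le C^\varphi_r(f)$ for all $r\in\mathcal{P}$; $\mathcal{W}^\varphi$ denotes the set of $\varphi$-WE. It is known that all elements of $\mathcal{W}^\varphi$ induce the same edge-flows, and conversely any $f\in\mathcal{H}$ inducing these edge-flows lies in $\mathcal{W}^\varphi$; the common edge-flow on $e_k$ is denoted $f^\varphi_{e_k}$. *)

(* Defs.v *)
From HB Require Import structures.
From mathcomp Require Import all_boot all_order all_algebra.
From mathcomp Require Import all_classical all_reals topology normedtype.
Set Implicit Arguments. Unset Strict Implicit. Unset Printing Implicit Defensive.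
Import Order.TTheory GRing.Theory Num.Theory.
Local Open Scope ring_scope.

Section Routing.
Variables (V E : finType) (src dst : E -> V).

Fixpoint walk (v : V) (p : seq E) (w : V) : bool :=
  if p is e :: p' then (src e == v) && walk (dst e) p' w else v == w.

Definition acyc_path (vo vd : V) (p : seq E) : bool :=
  walk vo p vd && uniq (vo :: map dst p).

(* All edge sequences of length <= #|V| (an acyclic path has < #|V| edges). *)
Definition short_seqs : seq (seq E) :=
  flatten [seq [seq tval t | t : n.-tuple E] | n <- iota 0 #|V|.+1].

Definition Paths (vo vd : V) : seq (seq E) :=
  undup [seq p <- short_seqs | acyc_path vo vd p].

Variables (R : realType) (m : nat) (vo vd : V).
(* cost functions C^{theta_s}_e *)
Variable C : 'I_m -> E -> R -> R.

Definition edge_flow (f : seq E -> R) (e : E) : R :=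
  \sum_(p <- Paths vo vd | e \in p) f p.

Definition path_cost (phi : 'I_m -> R) (f : seq E -> R) (p : seq E) : R :=
  \sum_(s < m) phi s * \sum_(e <- p) C s e (edge_flow f e).

Definition feasible (f : seq E -> R) : Prop :=
  (forall p, p \in Paths vo vd -> 0 <= f p) /\ \sum_(p <- Paths vo vd) f p = 1.

Definition wardrop (phi : 'I_m -> R) (f : seq E -> R) : Prop :=
  feasible f /\
  forall p, p \in Paths vo vd -> 0 < f p ->
    forall r, r \in Paths vo vd -> path_cost phi f p <= path_cost phi f r.

Definition used_route (phi : 'I_m -> R) (p : seq E) : Prop :=
  p \in Paths vo vd /\ exists f, wardrop phi f /\ 0 < f p.

Definition in_simplex (phi : 'I_m -> R) : Prop :=
  (forall s, 0 <= phi s) /\ \sum_(s < m) phi s = 1.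

End Routing.

(* Main.v *)
Require Import Defs.
From HB Require Import structures.
From mathcomp Require Import all_boot all_order all_algebra.
From mathcomp Require Import all_classical all_reals all_analysis.
From mathcomp Require Import all_classical all_reals topology normedtype.
From mathcomp Require Import ring lra zify.
From Stdlib Require Import Lia.
Import Order.TTheory GRing.Theory Num.Theory numFieldNormedType.Exports.
Local Open Scope ring_scope.
Local Open Scope classical_set_scope.
Set Implicit Arguments. Unset Strict Implicit. Unset Printing Implicit Defensive.
Lemma cont_eps (R : realType) (g : R -> R)
  (hg : {within [set x : R | 0 <= x], continuous g}) (x : R) (hx : 0 <= x)
  (eta : R) (he : 0 < eta) :
  exists2 d : R, 0 < d & forall y, 0 <= y -> `|y - x| < d -> `|g y - g x| < eta.
Proof.
have := (proj1 (subspace_continuousP _ _) hg) x hx.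
move=> /cvgrPdist_lt /(_ _ he).
rewrite near_withinE.
move=> /nbhs_ballP [d /= d0 hd].
exists d => // y y0 yx.
rewrite distrC; apply: hd => //.
by rewrite /ball /= distrC.
Qed.
Section Int.
Variable R : realType.
Notation mu := (@lebesgue_measure R).
Definition Ig (g : R -> R) (y : R) : R := (\int[mu]_(t in `[0, y]) g t)%R.

Lemma Ig_bound (g : R -> R)
  (hg : {within [set x : R | 0 <= x], continuous g})
  (hm : forall x y, 0 <= x -> x <= y -> g x <= g y) (x y : R) :
  0 <= x -> x <= y ->
  g x * (y - x) <= Ig g y - Ig g x <= g y * (y - x).
Proof.
move=> x0 xy.
have y0 : 0 <= y by exact: le_trans xy.
have intg : mu.-integrable `[0, y] (EFin \o g).
  apply: continuous_compact_integrable; first exact: segment_compact.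
  apply: continuous_subspaceW hg => t /=; rewrite in_itv /= => /andP[].
  done.
rewrite /Ig Rintegral_itvB //. all: try (by rewrite bnd_simp).
have intxy : mu.-integrable `]x, y] (EFin \o g).
  apply: integrableS intg => //.
  apply: subset_itvr; rewrite bnd_simp.
  by [].
have cstint : forall c : R, mu.-integrable `]x, y] (EFin \o (fun=> c)).
  move=> c.
  have ic : mu.-integrable `[x, y] (EFin \o (fun=> c)).
    apply: continuous_compact_integrable; first exact: segment_compact.
    by apply: continuous_subspaceT; exact: cst_continuous.
  apply: integrableS ic => //.
  by apply: subset_itvr; rewrite bnd_simp.
have mxy : measurable `]x, y] by [].
have muxy : fine (mu `]x, y]) = y - x.
  rewrite lebesgue_measure_itv /= lte_fin.
  have [xy'|] := ltP x y; first by [].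
  move=> yx; have exy : x = y by apply/le_anti; rewrite xy yx.
  by rewrite exy subrr.
apply/andP; split.
- have -> : g x * (y - x) = (\int[mu]_(t in `]x, y]) g x)%R.
    by rewrite Rintegral_cst // muxy.
  apply: le_Rintegral => //.
  move=> t; rewrite /= in_itv /= => /andP[xt ty]; apply: hm => //.
  exact: ltW.
- have -> : g y * (y - x) = (\int[mu]_(t in `]x, y]) g y)%R.
    by rewrite Rintegral_cst // muxy.
  apply: le_Rintegral => //.
  move=> t; rewrite /= in_itv /= => /andP[xt ty]; apply: hm => //.
  exact: le_trans (ltW xt).
Qed.
End Int.
Section Top.
Variable R : realType.

Lemma lip_cont (h : R -> R) (K : R) : 0 <= K ->
  (forall x y, `|h x - h y| <= K * `|x - y|) -> continuous h.
Proof.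
move=> K0 hl x; apply/cvgrPdist_lt => eps eps0.
have K1 : 0 < K + 1 by rewrite ltr_wpDl.
apply/nbhs_ballP; exists (eps / (K + 1)) => /=; first by rewrite divr_gt0.
move=> y; rewrite /ball /= => hy.
apply: (le_lt_trans (hl x y)).
have -> : eps = (K + 1) * (eps / (K + 1)) by rewrite mulrC divfK // gt_eqF.
apply: (@le_lt_trans _ _ (K * (eps / (K + 1)))).
  by apply: ler_wpM2l => //; exact: ltW.
by rewrite ltr_pM2r ?divr_gt0 // ltrDl.
Qed.

Definition simplex n : set 'rV[R]_n :=
  [set v | (forall i, 0 <= v ord0 i) /\ \sum_(i < n) v ord0 i = 1].

Lemma sum_cont n (F : 'I_n -> 'rV[R]_n -> R) (Q : pred 'I_n) :
  (forall i, continuous (F i)) -> continuous (fun v => \sum_(i < n | Q i) F i v).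
Proof.
move=> hF; elim: (index_enum _) => [|a s IH].
  under eq_fun do rewrite big_nil.
  exact: cst_continuous.
under eq_fun do rewrite big_cons.
case: (Q a).
  move=> x; apply: continuousD; [exact: hF | exact: IH].
exact: IH.
Qed.

Lemma simplex_compact n : compact (@simplex n).
Proof.
have -> : @simplex n = [set v : 'rV[R]_n | forall i, `[0, 1]%classic (v ord0 i)]
   `&` ((fun v : 'rV[R]_n => \sum_(i < n) v ord0 i) @^-1` [set 1]).
  apply/seteqP; split => v /=.
    move=> [h0 h1]; split => // i; rewrite in_itv /= h0 /=.
    rewrite -h1 (bigD1 i) //= lerDl sumr_ge0 //.
  move=> [h0 h1]; split => // i; have := h0 i; rewrite in_itv /= => /andP[].
  done.
apply: compact_closedI.
  by apply: (@rV_compact R n (fun=> `[0, 1]%classic)) => i; exact: segment_compact.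
apply: preimage_closed.
  move=> v _; apply: sum_cont => i; exact: coord_continuous.
exact: closed_eq.
Qed.
End Top.
Section Comb.
Variables (V E : finType) (src dst : E -> V).
Local Notation walk := (walk src dst).

Lemma walk_end v s w : walk v s w -> w = last v (map dst s).
Proof.
elim: s v => [|e s IH] v /=; first by move/eqP.
by move=> /andP[_ /IH].
Qed.

Lemma walk_cat v s1 s2 w :
  walk v (s1 ++ s2) w =
  walk v s1 (last v (map dst s1)) && walk (last v (map dst s1)) s2 w.
Proof.
elim: s1 v => [|e s IH] v /=; first by rewrite eqxx.
by rewrite IH andbA.
Qed.

Lemma walk_catI v u w s1 s2 : walk v s1 u -> walk u s2 w -> walk v (s1 ++ s2) w.
Proof.
move=> h1 h2; rewrite walk_cat -(walk_end h1) h1 /=; exact: h2.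
Qed.

Lemma walk_split v A e B w :
  walk v (A ++ e :: B) w -> walk v A (src e) /\ walk (dst e) B w.
Proof.
rewrite walk_cat /= => /andP[h1 /andP[/eqP he h2]]; split => //.
by rewrite he.
Qed.

Lemma shorten v w x : walk v w x ->
  exists q, [/\ subseq q w, walk v q x & uniq (v :: map dst q)].
Proof.
elim: w v => [|e w IH] v /=.
  by move=> h; exists [::]; rewrite /= h.
move=> /andP[/eqP se /IH [q' [sq' wq' uq']]].
case: (boolP (v \in dst e :: map dst q')) => [|vn].
  rewrite inE => /orP[/eqP vd|/mapP [e' e'q vd]].
    exists q'; split.
    - exact: subseq_trans sq' (subseq_cons w e).
    - by rewrite vd.
    - by rewrite vd.
  move: sq' wq' uq'; case/splitPr: e'q => q1 q2 sq' wq' uq'.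
  exists q2; split.
  - apply: subseq_trans (subseq_cons w e).
    apply: subseq_trans sq'.
    by rewrite -cat_rcons; exact: suffix_subseq.
  - by rewrite vd; case: (walk_split wq').
  - move: uq'; rewrite map_cat -cat_cons cat_uniq => /and3P[_ _].
    by rewrite vd.
exists (e :: q'); split => /=.
- by rewrite eqxx.
- by rewrite se eqxx.
- by rewrite vn.
Qed.

Lemma sum_ge0_seq (R : numDomainType) (c : E -> R) (w : seq E) :
  (forall e, e \in w -> 0 <= c e) -> 0 <= \sum_(e <- w) c e.
Proof. by move=> h; rewrite big_seq; apply: sumr_ge0 => e /h. Qed.

Lemma subseq_cost_le (R : numDomainType) (c : E -> R) q w :
  subseq q w -> (forall e, e \in w -> 0 <= c e) ->
  \sum_(e <- q) c e <= \sum_(e <- w) c e.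
Proof.
elim: w q => [|a w IH] [|b q] //=.
- move=> _ h; rewrite big_nil; exact: sum_ge0_seq.
- have hw : (forall e, e \in a :: w -> 0 <= c e) -> forall e, e \in w -> 0 <= c e.
    by move=> h e ew; apply: h; rewrite inE ew orbT.
  case: eqP => [-> sq h|_ sq h].
    by rewrite !big_cons lerD2l; apply: IH => //; exact: hw.
  rewrite [X in _ <= X]big_cons -[X in X <= _]add0r; apply: lerD.
    by apply: h; rewrite inE eqxx.
  by apply: IH => //; exact: hw.
Qed.

Lemma subseq_cost_lt (R : numDomainType) (c : E -> R) q w :
  subseq q w -> q != w -> (forall e, e \in w -> 0 < c e) ->
  \sum_(e <- q) c e < \sum_(e <- w) c e.
Proof.
elim: w q => [|a w IH] [|b q] //=.
- move=> _ _ h; rewrite big_nil big_cons; apply: ltr_pwDl.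
    by apply: h; rewrite inE eqxx.
  by apply: sum_ge0_seq => e ew; apply: ltW; apply: h; rewrite inE ew orbT.
- have hw : (forall e, e \in a :: w -> 0 < c e) -> forall e, e \in w -> 0 < c e.
    by move=> h e ew; apply: h; rewrite inE ew orbT.
  case: eqP => [-> sq nq h|_ sq _ h].
    rewrite !big_cons ltrD2l; apply: IH => //; last exact: hw.
    by apply: contra nq => /eqP ->.
  rewrite [X in _ < X]big_cons -[X in X < _]add0r; apply: ltr_leD.
    by apply: h; rewrite inE eqxx.
  by apply: subseq_cost_le => // e ew; apply: ltW; apply: hw.
Qed.

Variables (vo vd : V).
Local Notation P := (Paths src dst vo vd).

Lemma P_uniq : uniq P.
Proof. exact: undup_uniq. Qed.

Lemma memP q : (q \in P) = walk vo q vd && uniq (vo :: map dst q).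
Proof.
rewrite /Paths mem_undup mem_filter /acyc_path; apply/andb_idr => /andP[_ u].
rewrite /short_seqs; apply/flatten_mapP; exists (size q).
  rewrite mem_iota /= add0n ltnS.
  have := max_card (mem (vo :: map dst q)).
  by rewrite (card_uniqP u) /= size_map => /ltnW.
by apply/mapP; exists (in_tuple q); rewrite ?mem_enum. Qed.

Lemma P_walk q : q \in P -> walk vo q vd.
Proof. by rewrite memP => /andP[]. Qed.

Lemma P_uniq_edges q : q \in P -> uniq q.
Proof. by rewrite memP => /and3P[_ _ /map_uniq]. Qed.

Lemma shortenP w : walk vo w vd -> exists2 q, q \in P & subseq q w.
Proof.
move=> /shorten [q [sq wq uq]]; exists q => //; by rewrite memP wq uq.
Qed.
End Comb.
Section Equil.
Variables (V E : finType) (src dst : E -> V) (vo vd : V) (R : realType) (m : nat)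
  (C : 'I_m -> E -> R -> R) (phi : 'I_m -> R).
Hypothesis hincr : forall s e (x y : R), 0 <= x -> x < y -> C s e x < C s e y.
Hypothesis hpos : forall s e (x : R), 0 <= x -> 0 <= C s e x.
Hypothesis hphi : in_simplex phi.
Local Notation P := (Paths src dst vo vd).
Local Notation ef := (edge_flow src dst vo vd).
Local Notation pc := (path_cost src dst vo vd C phi).
Local Notation wardrop := (wardrop src dst vo vd C phi).
Local Notation feasible := (feasible src dst vo vd).

Definition ce e x := \sum_(s < m) phi s * C s e x.

Lemma phi_pos : exists s, 0 < phi s.
Proof.
case: hphi => h0 h1; apply/not_existsP => hn.
have : \sum_(s < m) phi s = 0.
  apply: big1 => s _; apply/eqP; rewrite eq_le h0 andbT leNgt.
  by apply/negP => hs; apply: (hn s).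
by rewrite h1 => /eqP; rewrite oner_eq0.
Qed.

Lemma ce_ge0 e x : 0 <= x -> 0 <= ce e x.
Proof.
move=> x0; apply: sumr_ge0 => s _; apply: mulr_ge0; first by case: hphi.
exact: hpos.
Qed.

Lemma ce_lt e x y : 0 <= x -> x < y -> ce e x < ce e y.
Proof.
move=> x0 xy; rewrite -subr_gt0 /ce -sumrB.
have [s0 hs0] := phi_pos.
rewrite (bigD1 s0) //= ltr_pwDl //.
  by rewrite -mulrBr mulr_gt0 // subr_gt0; apply: hincr.
apply: sumr_ge0 => s _; rewrite -mulrBr mulr_ge0 //; first by case: hphi.
by rewrite subr_ge0; apply: ltW; apply: hincr.
Qed.

Lemma ce_le e x y : 0 <= x -> x <= y -> ce e x <= ce e y.
Proof.
move=> x0; rewrite le_eqVlt => /orP[/eqP->//|xy].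
by apply: ltW; apply: ce_lt.
Qed.

Lemma pcE (f : seq E -> R) q : pc f q = \sum_(e <- q) ce e (ef f e).
Proof.
rewrite /path_cost /ce exchange_big /=; apply: eq_bigr => s _.
by rewrite big_distrr.
Qed.

Lemma ef_ge0 (f : seq E -> R) e : feasible f -> 0 <= ef f e.
Proof.
move=> [h0 _]; rewrite /edge_flow big_seq_cond; apply: sumr_ge0 => q /andP[qP _].
exact: h0.
Qed.

Lemma ef_le1 (f : seq E -> R) e : feasible f -> ef f e <= 1.
Proof.
move=> [h0 h1]; rewrite -h1 /edge_flow [X in _ <= X](bigID (fun q => e \in q)) /=.
rewrite lerDl big_seq_cond; apply: sumr_ge0 => q /andP[qP _]; exact: h0.
Qed.

Lemma uniq_sum (F : E -> R) q : uniq q ->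
  \sum_(e <- q) F e = \sum_(e : E) (e \in q)%:R * F e.
Proof.
move=> uq; rewrite big_uniq // big_mkcond; apply: eq_bigr => e _.
by case: (e \in q); rewrite ?mul1r ?mul0r.
Qed.

Lemma sum_exch (f h : seq E -> R) :
  \sum_(q <- P) pc f q * h q = \sum_(e : E) ce e (ef f e) * ef h e.
Proof.
transitivity (\sum_(q <- P) \sum_(e : E) (e \in q)%:R * ce e (ef f e) * h q).
  rewrite big_seq [RHS]big_seq; apply: eq_bigr => q qP.
  by rewrite pcE (uniq_sum _ (P_uniq_edges qP)) big_distrl.
rewrite exchange_big /=; apply: eq_bigr => e _.
rewrite /edge_flow big_distrr /= [RHS]big_mkcond /=; apply: eq_bigr => q _.
by case: (e \in q); rewrite ?mul1r ?mul0r ?mulr0.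
Qed.

Lemma exists_pos (f : seq E -> R) : feasible f -> exists2 p, p \in P & 0 < f p.
Proof.
move=> [h0 h1]; apply/not_exists2P => hn.
have : \sum_(q <- P) f q <= 0.
  rewrite big_seq; apply: sumr_le0 => q qP; rewrite leNgt; apply/negP => hq.
  by have := hn q; case=> [|]; [| apply/negP]; rewrite ?qP // hq.
by rewrite h1 ler10.
Qed.

Lemma wardrop_min (f : seq E -> R) : wardrop f ->
  exists mu, (forall q, q \in P -> mu <= pc f q) /\
             (forall q, q \in P -> 0 < f q -> pc f q = mu).
Proof.
move=> [hf hw]; have [p0 p0P fp0] := exists_pos hf.
exists (pc f p0); split; first by move=> q qP; exact: hw.
move=> q qP fq; apply/le_anti; rewrite hw //=; exact: hw.
Qed.

Lemma vi (f g : seq E -> R) : wardrop f -> feasible g ->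
  \sum_(e : E) ce e (ef f e) * ef f e <= \sum_(e : E) ce e (ef f e) * ef g e.
Proof.
move=> wf fg; rewrite -!sum_exch.
have [mu [hmu1 hmu2]] := wardrop_min wf.
have [[f0 f1] _] := wf; have [g0 g1] := fg.
apply: (@le_trans _ _ mu).
  rewrite le_eqVlt; apply/orP; left; apply/eqP.
  rewrite -[RHS]mulr1 -f1 big_distrr /= big_seq [RHS]big_seq.
  apply: eq_bigr => q qP.
  have := f0 q qP; rewrite le_eqVlt => /orP[/eqP<-|fq]; first by rewrite !mulr0.
  by rewrite hmu2 // mulrC.
rewrite -[X in X <= _]mulr1 -g1 big_distrr /= big_seq [X in _ <= X]big_seq.
apply: ler_sum => q qP; apply: ler_wpM2r; first exact: g0.
exact: hmu1.
Qed.

Lemma ef_uniq (f g : seq E -> R) : wardrop f -> wardrop g -> forall e, ef f e = ef g e.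
Proof.
move=> wf wg.
have ff := proj1 wf; have fg := proj1 wg.
have h1 := vi wf fg; have h2 := vi wg ff.
pose F e := (ce e (ef f e) - ce e (ef g e)) * (ef f e - ef g e).
have F0 : forall e, 0 <= F e.
  move=> e; rewrite /F.
  have x0 := ef_ge0 e ff; have y0 := ef_ge0 e fg.
  case: (ltgtP (ef f e) (ef g e)) => [xy|yx|->]; last by rewrite !subrr mulr0.
    apply: mulr_le0; rewrite subr_le0; last exact: ltW.
    by apply: ltW; exact: ce_lt.
  apply: mulr_ge0; rewrite subr_ge0; last exact: ltW.
  by apply: ltW; exact: ce_lt.
have S0 : \sum_(e : E) F e = 0.
  apply/le_anti; rewrite sumr_ge0 // andbT.
  have -> : \sum_(e : E) F e =
    (\sum_(e : E) ce e (ef f e) * ef f e - \sum_(e : E) ce e (ef f e) * ef g e) +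
    (\sum_(e : E) ce e (ef g e) * ef g e - \sum_(e : E) ce e (ef g e) * ef f e).
    rewrite -!sumrB -big_split /=; apply: eq_bigr => e _; rewrite /F.
    by rewrite mulrBr !mulrBl; lra.
  have a1 : forall a b : R, a <= b -> a - b <= 0 by move=> a b; rewrite subr_le0.
  by apply: (le_trans (lerD (a1 _ _ h1) (a1 _ _ h2))); rewrite addr0.
move=> e; have := psumr_eq0P (fun i _ => F0 i) S0 (i := e) isT.
rewrite /F => /eqP; rewrite mulf_eq0 => /orP[|]; last by rewrite subr_eq0 => /eqP.
rewrite subr_eq0 => /eqP hc.
have x0 := ef_ge0 e ff; have y0 := ef_ge0 e fg.
case: (ltgtP (ef f e) (ef g e)) => // [xy|yx].
  by have := ce_lt e x0 xy; rewrite hc ltxx.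
by have := ce_lt e y0 yx; rewrite hc ltxx.
Qed.

Lemma pc_ext (f g : seq E -> R) : (forall e, ef f e = ef g e) -> forall q, pc f q = pc g q.
Proof. by move=> h q; rewrite !pcE; apply: eq_bigr => e _; rewrite h. Qed.

Lemma ef_ge_path (f : seq E -> R) p e : feasible f -> p \in P -> e \in p -> f p <= ef f e.
Proof.
move=> [h0 _] pP ep; rewrite /edge_flow big_mkcond (bigD1_seq p) //=; last exact: P_uniq.
rewrite ep lerDl big_seq_cond; apply: sumr_ge0 => q /andP[qP _].
by case: ifP => // _; exact: h0.
Qed.
End Equil.
Lemma count_cross (T : eqType) (A B : T -> seq T) (a : pred T) (e1 : T) (s : seq T) :
  count a (flatten (map (fun e => A e ++ e :: B e) (e1 :: s))) =
  (count a (A e1) + count a (e1 :: s) +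
   count a (flatten (pairmap (fun x y => A y ++ B x) e1 s)) +
   count a (B (last e1 s)))%N.
Proof.
elim: s e1 => [|b s IH] e1 /=.
  rewrite ?cats0 !count_cat /=; lia.
rewrite count_cat IH /= !count_cat /=; lia.
Qed.

Lemma walk_loop (V E : finType) (src dst : E -> V) v A rest :
  walk src dst v A v -> uniq (v :: map dst (A ++ rest)) -> A = [::].
Proof.
case: A => // a A /walk_end /= hv.
rewrite map_cat /= => /andP[/negP hn _]; exfalso; apply: hn.
rewrite -cat_cons mem_cat; apply/orP; left; rewrite {1}hv.
by rewrite mem_last.
Qed.

Lemma walk_loop_end (V E : finType) (src dst : E -> V) v pre x B :
  dst x = v -> walk src dst v B v -> uniq (map dst (pre ++ x :: B)) -> B = [::].
Proof.
move=> hx; case: B => // b B /walk_end /= hv.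
rewrite map_cat cat_uniq /= => /and3P[_ _ /andP[/negP hn _]]; exfalso; apply: hn.
by rewrite hx {1}hv mem_last.
Qed.

Lemma pairmap_walk (V E : finType) (src dst : E -> V) (F : E -> E -> seq E)
   u a s w : walk src dst u (a :: s) w ->
   forall W, W \in pairmap F a s -> exists a' b',
     [/\ a' \in a :: s, b' \in a :: s, src b' = dst a' & W = F a' b'].
Proof.
elim: s a u => [|b s IH] a u //= /andP[_ /andP[/eqP hb hw]] W.
rewrite inE => /orP[/eqP ->|hW].
  by exists a, b; rewrite !inE !eqxx orbT.
have [a' [b' [h1 h2 h3 h4]]] : exists a' b',
     [/\ a' \in b :: s, b' \in b :: s, src b' = dst a' & W = F a' b'].
  by apply: (IH b (dst a)) => //=; rewrite hb eqxx.
by exists a', b'; split => //; rewrite inE ?h1 ?h2 orbT.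
Qed.

Lemma sum_const_seq (R : numDomainType) (T : Type) (s : seq T) (x : R) :
  \sum_(i <- s) x = (size s)%:R * x.
Proof.
elim: s => [|a s IH]; first by rewrite big_nil mul0r.
by rewrite big_cons IH /= -add1n natrD mulrDl mul1r.
Qed.

Section Decomp.
Variables (V E : finType) (src dst : E -> V) (vo vd : V) (R : realType) (m : nat)
  (C : 'I_m -> E -> R -> R) (phi : 'I_m -> R).
Hypothesis hincr : forall s e (x y : R), 0 <= x -> x < y -> C s e x < C s e y.
Hypothesis hpos : forall s e (x : R), 0 <= x -> 0 <= C s e x.
Hypothesis hphi : in_simplex phi.
Local Notation P := (Paths src dst vo vd).
Local Notation ef := (edge_flow src dst vo vd).
Local Notation pc := (path_cost src dst vo vd C phi).
Local Notation wardrop := (wardrop src dst vo vd C phi).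
Local Notation feasible := (feasible src dst vo vd).
Local Notation walk := (walk src dst).

Lemma sum_cnt (L : seq (seq E)) : (forall w, w \in L -> w \in P) ->
  \sum_(q <- P) (count_mem q L)%:R = (size L)%:R :> R.
Proof.
elim: L => [|w L IH] hL /=.
  by rewrite big1 // => q _.
rewrite -add1n natrD -IH => [|x xL]; last by apply: hL; rewrite inE xL orbT.
rewrite -[X in _ = X + _](_ : \sum_(q <- P) ((w == q) : nat)%:R = 1).
  by rewrite -big_split /=; apply: eq_bigr => q _; rewrite natrD.
rewrite (bigD1_seq w) //=; [|by apply: hL; rewrite inE eqxx|exact: P_uniq].
rewrite eqxx big1_seq ?addr0 // => q /andP[qw _].
by rewrite eq_sym (negbTE qw).
Qed.

Lemma sum_cnt_edge (L : seq (seq E)) e : (forall w, w \in L -> w \in P) ->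
  \sum_(q <- P | e \in q) (count_mem q L)%:R = (count_mem e (flatten L))%:R :> R.
Proof.
elim: L => [|w L IH] hL /=.
  by rewrite big1 // => q _.
have wP : w \in P by apply: hL; rewrite inE eqxx.
rewrite count_cat natrD -IH => [|x xL]; last by apply: hL; rewrite inE xL orbT.
rewrite (count_uniq_mem _ (P_uniq_edges wP)).
rewrite -[X in _ = X + _](_ : \sum_(q <- P | e \in q) ((w == q) : nat)%:R = (e \in w)%:R).
  by rewrite -big_split /=; apply: eq_bigr => q _; rewrite natrD.
rewrite big_mkcond (bigD1_seq w) //=; last exact: P_uniq.
rewrite eqxx big1_seq ?addr0 => [|q /andP[qw _]]; first by case: (e \in w).
by rewrite eq_sym (negbTE qw); case: (e \in q).
Qed.

Variable f : seq E -> R.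
Hypothesis wf : wardrop f.
Variable mu : R.
Hypothesis hmu1 : forall q, q \in P -> mu <= pc f q.
Hypothesis hmu2 : forall q, q \in P -> 0 < f q -> pc f q = mu.

Let c e := ce C phi e (ef f e).
Let cost (s : seq E) := \sum_(e <- s) c e.

Lemma c_ge0 e : 0 <= c e.
Proof. apply: (ce_ge0 hpos hphi e); exact: ef_ge0 (proj1 wf). Qed.

Lemma c_gt0 e : 0 < ef f e -> 0 < c e.
Proof.
move=> h; apply: le_lt_trans (ce_lt hincr hphi e (lexx 0) h).
exact: (ce_ge0 hpos hphi e (lexx 0)).
Qed.

Lemma pc_cost q : pc f q = cost q.
Proof. by rewrite pcE. Qed.

Lemma cost_cat s1 s2 : cost (s1 ++ s2) = cost s1 + cost s2.
Proof. by rewrite /cost big_cat. Qed.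

Lemma cost_cons x s : cost (x :: s) = c x + cost s.
Proof. by rewrite /cost big_cons. Qed.

Lemma walk_ge w : walk vo w vd -> mu <= cost w.
Proof.
move=> /shortenP [q qP sq]; apply: le_trans (hmu1 qP) _.
rewrite pc_cost; apply: subseq_cost_le sq _ => e _; exact: c_ge0.
Qed.

Lemma walk_inP w : walk vo w vd -> (forall e, e \in w -> 0 < ef f e) ->
  cost w <= mu -> w \in P.
Proof.
move=> hw hp hc; have [q qP sq] := shortenP hw.
case: (eqVneq q w) => [<-//|nq].
have h2 := subseq_cost_lt sq nq (fun e ew => c_gt0 (hp e ew)).
have h1 := hmu1 qP; rewrite pc_cost in h1.
have : mu < mu by apply: le_lt_trans h1 (lt_le_trans h2 hc).
by rewrite ltxx.
Qed.

Lemma exists_path e : 0 < ef f e -> exists q, [/\ q \in P, 0 < f q & e \in q].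
Proof.
move=> h; apply/not_existsP => hn; move: h; apply/negP; rewrite -leNgt.
rewrite /edge_flow big_seq_cond; apply: sumr_le0 => q /andP[qP eq].
rewrite leNgt; apply/negP => fq; apply: (hn q); split => //.
Qed.

Lemma nil_pos : [::] \in P -> 0 < f [::].
Proof.
move=> nP; have hw := P_walk nP; move: hw => /= /eqP hv.
have allnil : forall q, q \in P -> q = [::].
  move=> q qP; move: (qP); rewrite memP => /andP[hq uq].
  apply: (@walk_loop _ _ src dst vo q [::]); first by rewrite {2}hv.
  by rewrite cats0.
have [[f0 f1] _] := wf.
have : \sum_(q <- P) f q = (size P)%:R * f [::].
  rewrite -sum_const_seq big_seq [RHS]big_seq; apply: eq_bigr => q qP.
  by rewrite (allnil q qP).
rewrite f1 => h; have := f0 _ nP; rewrite le_eqVlt => /orP[/eqP h0|//].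
by move: h; rewrite -h0 mulr0 => /eqP; rewrite oner_eq0.
Qed.

Lemma decomp p : p \in P -> (forall e, e \in p -> 0 < ef f e) -> f p = 0 ->
  exists g, wardrop g /\ 0 < g p.
Proof.
move=> pP hp fp0.
case: p pP hp fp0 => [nP _ fp0|e1 s pP hp fp0].
  by have := nil_pos nP; rewrite fp0 ltxx.
set p := e1 :: s in pP hp fp0 *.
have hq : forall e, exists q, e \in p -> [/\ q \in P, 0 < f q & e \in q].
  move=> e; case: (boolP (e \in p)) => ep; last by exists [::].
  by have [q hq] := exists_path (hp e ep); exists q.
have [qf hqf] := boolp.choice hq.
pose A e := take (index e (qf e)) (qf e).
pose B e := drop (index e (qf e)).+1 (qf e).
have qsplit : forall e, e \in p -> qf e = A e ++ e :: B e.
  move=> e ep; have [_ _ eq] := hqf e ep.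
  by rewrite /A /B -{1}(cat_take_drop (index e (qf e)) (qf e)) (drop_nth e)
    ?index_mem // nth_index.
have hAB : forall e, e \in p -> walk vo (A e) (src e) /\ walk (dst e) (B e) vd.
  move=> e ep; apply: walk_split; rewrite -qsplit //; apply: P_walk.
  by case: (hqf e ep).
have costq : forall e, e \in p -> cost (A e) + c e + cost (B e) = mu.
  move=> e ep; have [qP fq _] := hqf e ep.
  by rewrite -(hmu2 qP fq) pc_cost (qsplit e ep) cost_cat cost_cons addrA.
have posq : forall e x, e \in p -> x \in qf e -> 0 < ef f x.
  move=> e x ep xq; have [qP fq _] := hqf e ep.
  exact: lt_le_trans fq (ef_ge_path (proj1 wf) qP xq).
have hpw : walk vo p vd := P_walk pP.
have src1 : src e1 = vo by move: hpw => /= /andP[/eqP].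
have dstl : dst (last e1 s) = vd.
  by rewrite (walk_end hpw) /= last_map.
have A1 : A e1 = [::].
  have e1p : e1 \in p := mem_head e1 s.
  have [qP _ _] := hqf e1 e1p; move: qP; rewrite memP (qsplit e1 e1p) => /andP[_ u].
  have [h _] := hAB e1 e1p; rewrite src1 in h; exact: (walk_loop h u).
have Bl : B (last e1 s) = [::].
  have elp : last e1 s \in p := mem_last e1 s.
  have [qP _ _] := hqf _ elp; move: qP.
  rewrite memP (qsplit _ elp) => /andP[_ /= /andP[_ u]].
  have h := (hAB _ elp).2; rewrite dstl in h; exact: (walk_loop_end dstl h u).
pose X := pairmap (fun a b => A b ++ B a) e1 s.
have hX : forall W, W \in X -> W \in P /\ cost W = mu.
  move=> W /(pairmap_walk hpw) [a [b [ap bp hab ->]]].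
  have [hAa hBa] := hAB a ap; have [hAb hBb] := hAB b bp.
  have wW : walk vo (A b ++ B a) vd by apply: walk_catI hAb _; rewrite hab.
  have wZ : walk vo (A a ++ a :: b :: B b) vd.
    by apply: walk_catI hAa _ => /=; rewrite eqxx /= hab eqxx.
  have cW : cost (A b ++ B a) <= mu.
    have := walk_ge wZ; have := costq a ap; have := costq b bp.
    rewrite !cost_cat !cost_cons; lra.
  have WP : A b ++ B a \in P.
    apply: walk_inP wW _ cW => x; rewrite mem_cat => /orP[xA|xB].
      by apply: (posq b) => //; rewrite (qsplit b bp) mem_cat xA.
    by apply: (posq a) => //; rewrite (qsplit a ap) mem_cat /= inE xB !orbT.
  split => //; apply/le_anti; rewrite cW /= -pc_cost; exact: hmu1.
have hperm : forall a : pred E, count a (flatten (map qf p)) = count a (p ++ flatten X).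
  move=> a.
  have -> : map qf p = map (fun e => A e ++ e :: B e) p.
    by apply/eq_in_map => e ep; exact: qsplit.
  by rewrite count_cross A1 Bl /= count_cat /X add0n addn0 !addnA.
have hperm' : perm_eq (flatten (map qf p)) (p ++ flatten X) by apply/permP.
have cost_p : cost p = mu.
  have h : \sum_(w <- map qf p) cost w = cost p + \sum_(W <- X) cost W.
    rewrite /cost -!big_flatten -big_cat; exact: perm_big hperm'.
  move: h; rewrite big_map.
  have -> : \sum_(j <- p) cost (qf j) = \sum_(j <- p) mu.
    rewrite big_seq [RHS]big_seq; apply: eq_bigr => e ep.
    have [qP fq _] := hqf e ep; by rewrite -(hmu2 qP fq) pc_cost.
  have -> : \sum_(j <- X) cost j = \sum_(j <- X) mu.
    rewrite big_seq [RHS]big_seq; apply: eq_bigr => W WX.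
    by have [_ <-] := hX W WX.
  rewrite !sum_const_seq size_pairmap /= -add1n natrD; lra.
pose M := \big[Num.min/1]_(e <- p) f (qf e).
have M0 : 0 < M.
  rewrite /M big_seq; apply: (big_ind (fun x => 0 < x)) => //.
    by move=> x y x0 y0; rewrite lt_min x0 y0.
  by move=> e ep; case: (hqf e ep).
have Mle : forall e, e \in p -> M <= f (qf e).
  move=> e ep; rewrite /M (bigD1_seq e) //=; last exact: P_uniq_edges pP.
  by rewrite ge_min lexx.
pose k := (size p)%:R : R.
have k0 : 0 < k by rewrite /k ltr0n.
pose eps := M / k.
have eps0 : 0 < eps by rewrite divr_gt0.
have epsk : eps * k = M by rewrite /eps divfK // gt_eqF.
pose cnt (L : seq (seq E)) q := (count_mem q L)%:R : R.
pose g q := f q + eps * (cnt (p :: X) q - cnt (map qf p) q).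
have inP1 : forall w, w \in p :: X -> w \in P.
  by move=> w; rewrite inE => /orP[/eqP->//|/hX []].
have inP2 : forall w, w \in map qf p -> w \in P.
  by move=> w /mapP [e ep ->]; case: (hqf e ep).
have [[f0 f1] hwf] := wf.
have hef : forall e, ef g e = ef f e.
  move=> e; rewrite /edge_flow /g big_split /= -big_distrr /= sumrB.
  rewrite /cnt (sum_cnt_edge e inP1) (sum_cnt_edge e inP2).
  have -> : flatten (p :: X) = p ++ flatten X by [].
  by rewrite hperm subrr mulr0 addr0.
have fg : feasible g.
  split.
    move=> q qP; rewrite /g.
    case: (boolP (q \in map qf p)) => hqm.
      move: (hqm) => /mapP [e ep qe].
      have hc : cnt (map qf p) q <= k.
        by rewrite /cnt /k ler_nat -(size_map qf) count_size.
      have hc1 : 0 <= cnt (p :: X) q by rewrite /cnt ler0n.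
      have : M <= f q by rewrite qe; exact: Mle.
      have := ler_wpM2l (ltW eps0) hc; rewrite epsk.
      nra.
    rewrite /cnt (count_memPn hqm) subr0; apply: addr_ge0; first exact: f0.
    by apply: mulr_ge0; [exact: ltW | exact: ler0n].
  rewrite /g big_split /= f1 -big_distrr /= sumrB /cnt (sum_cnt inP1) (sum_cnt inP2).
  by rewrite /= size_map size_pairmap subrr mulr0 addr0.
have pcg : forall q, pc g q = pc f q by apply: pc_ext.
exists g; split.
  split => // q qP gq r rP; rewrite !pcg.
  apply: le_trans (hmu1 rP); rewrite le_eqVlt; apply/orP; left; apply/eqP.
  case: (ltrP 0 (f q)) => fq; first exact: hmu2.
  have fq0 : f q = 0 by apply/le_anti; rewrite fq f0.
  move: gq; rewrite /g fq0 add0r pmulr_rgt0 // subr_gt0 /cnt ltr_nat => hlt.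
  have : q \in p :: X.
    by rewrite -has_pred1 has_count; apply: leq_ltn_trans hlt.
  rewrite inE => /orP[/eqP->|/hX [] _ h]; by rewrite pc_cost ?cost_p ?h.
rewrite /g fp0 add0r; apply: mulr_gt0 => //.
have -> : cnt (map qf p) p = 0.
  rewrite /cnt; apply/eqP; rewrite pnatr_eq0; apply/eqP/count_memPn.
  apply/mapP => -[e ep pe]; have [_ fq _] := hqf e ep.
  by move: fq; rewrite -pe fp0 ltxx.
by rewrite subr0 /cnt /= eqxx ltr0n.
Qed.
End Decomp.
Section Gfun.
Variable R : realType.
Variable (g : R -> R).
Hypothesis hg : {within [set x : R | 0 <= x], continuous g}.
Hypothesis hgm : forall x y, 0 <= x -> x <= y -> g x <= g y.
Hypothesis hg0 : forall x, 0 <= x -> 0 <= g x.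

Definition clamp (x : R) : R := if x < 0 then 0 else if x < 1 then x else 1.

Lemma clampE x : clamp x = if x < 0 then 0 else if x < 1 then x else 1.
Proof. by []. Qed.

Lemma clamp01 x : 0 <= clamp x <= 1.
Proof.
rewrite clampE; case: (ltrP x 0) => ?; case: (ltrP x 1) => ?;
  apply/andP; split; lra.
Qed.

Lemma clamp_id x : 0 <= x <= 1 -> clamp x = x.
Proof.
rewrite clampE => /andP[? ?]; case: (ltrP x 0) => ?; case: (ltrP x 1) => ?; lra.
Qed.

Lemma clamp_lip x y : `|clamp x - clamp y| <= `|x - y|.
Proof.
rewrite !clampE ler_norml.
case: (lerP 0 (x - y)) => h; [rewrite (ger0_norm h) | rewrite (ltr0_norm h)];
  case: (ltrP x 0) => ?; case: (ltrP x 1) => ?;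
  case: (ltrP y 0) => ?; case: (ltrP y 1) => ?; apply/andP; split; lra.
Qed.

Lemma Ig_diff a b : 0 <= a -> 0 <= b -> Ig g b - Ig g a <= g b * (b - a).
Proof.
move=> a0 b0; case: (lerP a b) => ab.
  by have /andP[_ ->] := Ig_bound hg hgm a0 ab.
have /andP[h _] := Ig_bound hg hgm b0 (ltW ab).
lra.
Qed.

Lemma Ig_lip_aux a b : 0 <= a -> b <= 1 -> a <= b ->
  `|Ig g a - Ig g b| <= g 1 * `|a - b|.
Proof.
move=> a0 b1 ab.
have /andP[h1 h2] := Ig_bound hg hgm a0 ab.
have gy1 : g b <= g 1 by apply: hgm => //; exact: le_trans ab.
have gx0 : 0 <= g a by apply: hg0.
have hd : 0 <= b - a by rewrite subr_ge0.
have hI : 0 <= Ig g b - Ig g a.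
  by apply: le_trans h1; apply: mulr_ge0.
rewrite distrC [X in _ <= _ * X]distrC (ger0_norm hd) (ger0_norm hI).
apply: le_trans h2 _; exact: ler_wpM2r.
Qed.

Lemma Ig_lip x y : `|Ig g (clamp x) - Ig g (clamp y)| <= g 1 * `|x - y|.
Proof.
suff H : `|Ig g (clamp x) - Ig g (clamp y)| <= g 1 * `|clamp x - clamp y|.
  apply: le_trans H _; apply: ler_wpM2l; [exact: hg0 | exact: clamp_lip].
have /andP[x0 x1] := clamp01 x; have /andP[y0 y1] := clamp01 y.
case: (boolP (clamp x <= clamp y)) => h; first exact: (Ig_lip_aux x0 y1 h).
rewrite -ltNge in h.
rewrite distrC [X in _ <= _ * X]distrC; exact: (Ig_lip_aux y0 x1 (ltW h)).
Qed.
End Gfun.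

Lemma sum_contG (R : realType) (T : topologicalType) (I : finType) (Q : pred I)
  (F : I -> T -> R) :
  (forall i, continuous (F i)) -> continuous (fun v => \sum_(i | Q i) F i v).
Proof.
move=> hF; elim: (index_enum _) => [|a s IH].
  under eq_fun do rewrite big_nil.
  exact: cst_continuous.
under eq_fun do rewrite big_cons.
case: (Q a); last exact: IH.
move=> x; apply: continuousD; [exact: hF | exact: IH].
Qed.

Section Exist.
Variables (V E : finType) (src dst : E -> V) (vo vd : V) (R : realType) (m : nat)
  (C : 'I_m -> E -> R -> R) (phi : 'I_m -> R).
Hypothesis hP : Paths src dst vo vd != [::].
Hypothesis hcont : forall s e, {within [set x : R | 0 <= x], continuous (C s e : R -> R)}.
Hypothesis hincr : forall s e (x y : R), 0 <= x -> x < y -> C s e x < C s e y.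
Hypothesis hpos : forall s e (x : R), 0 <= x -> 0 <= C s e x.
Hypothesis hphi : in_simplex phi.
Local Notation P := (Paths src dst vo vd).
Local Notation ef := (edge_flow src dst vo vd).
Local Notation pc := (path_cost src dst vo vd C phi).
Local Notation wardrop := (wardrop src dst vo vd C phi).
Local Notation feasible := (feasible src dst vo vd).

Let n := size P.
Let L e (v : 'rV[R]_n) := \sum_(i < n | e \in nth [::] P i) v ord0 i.
Let flow (v : 'rV[R]_n) (q : seq E) := \sum_(i < n | nth [::] P i == q) v ord0 i.

Lemma C_mono s e x y : 0 <= x -> x <= y -> C s e x <= C s e y.
Proof.
move=> x0; rewrite le_eqVlt => /orP[/eqP->//|xy]; apply: ltW; exact: hincr.
Qed.

Lemma phi_ge0 s : 0 <= phi s.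
Proof. by case: hphi. Qed.

Lemma flow_nth v (i : 'I_n) : flow v (nth [::] P i) = v ord0 i.
Proof.
rewrite /flow (bigD1 i) //= big1 ?addr0 // => j /andP[/eqP hj ji].
exfalso; move/negP: ji; apply; apply/eqP/val_inj => /=; apply/eqP.
by rewrite -(nth_uniq [::] (ltn_ord j) (ltn_ord i) (P_uniq src dst vo vd)) hj.
Qed.

Lemma sumP_nth (F : seq E -> R) (Q : pred (seq E)) :
  \sum_(q <- P | Q q) F q = \sum_(i < n | Q (nth [::] P i)) F (nth [::] P i).
Proof. by rewrite (big_nth [::]) big_mkord. Qed.

Lemma ef_flow v e : ef (flow v) e = L e v.
Proof. rewrite /edge_flow sumP_nth; apply: eq_bigr => i _; exact: flow_nth. Qed.

Lemma flow_feasible v : v \in @simplex R n -> feasible (flow v).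
Proof.
rewrite inE => -[h0 h1]; split.
  move=> q qP; have hi : (index q P < n)%N by rewrite index_mem.
  by rewrite -(nth_index [::] qP) (flow_nth _ (Ordinal hi)).
rewrite (big_nth [::]) big_mkord -h1; apply: eq_bigr => i _; exact: flow_nth.
Qed.

Lemma L01 v e : v \in @simplex R n -> 0 <= L e v <= 1.
Proof.
rewrite inE => -[h0 h1]; apply/andP; split; first by apply: sumr_ge0.
rewrite -h1 /L big_mkcond /=; apply: ler_sum => i _.
by case: ifP => // _; exact: h0.
Qed.

Let Gh e x := \sum_(s < m) phi s * Ig (C s e) (clamp x).
Let Phi v := \sum_(e : E) Gh e (L e v).

Lemma Gh_diff e a b : 0 <= a <= 1 -> 0 <= b <= 1 ->
  Gh e b - Gh e a <= ce C phi e b * (b - a).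
Proof.
move=> ha hb; rewrite /Gh !clamp_id // -sumrB /ce big_distrl /=.
apply: ler_sum => s _; rewrite -mulrBr -mulrA; apply: ler_wpM2l; first exact: phi_ge0.
move: ha hb => /andP[a0 _] /andP[b0 _].
apply: Ig_diff => // x y; exact: C_mono.
Qed.

Lemma Gh_cont e : continuous (Gh e).
Proof.
apply: (@lip_cont _ _ (\sum_(s < m) phi s * C s e 1)).
  apply: sumr_ge0 => s _; apply: mulr_ge0; [exact: phi_ge0 | exact: hpos].
move=> x y; rewrite /Gh -sumrB; apply: le_trans (ler_norm_sum _ _ _) _.
rewrite big_distrl /=; apply: ler_sum => s _.
rewrite -mulrBr normrM (ger0_norm (phi_ge0 s)) -mulrA; apply: ler_wpM2l.
  exact: phi_ge0.
apply: Ig_lip => // [a b|a]; [exact: C_mono | exact: hpos].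
Qed.

Lemma L_cont e : continuous (L e).
Proof. by apply: sum_contG => i; exact: coord_continuous. Qed.

Lemma Phi_cont : continuous Phi.
Proof.
apply: sum_contG => e v; apply: continuous_comp; [exact: L_cont | exact: Gh_cont].
Qed.

Lemma sum_ind (Q : pred 'I_n) j : \sum_(k < n | Q k) ((k == j)%:R : R) = (Q j)%:R.
Proof.
rewrite big_mkcond (bigD1 j) //= eqxx big1 ?addr0 => [|k /negbTE ->].
  by case: (Q j).
by case: (Q k).
Qed.

Lemma sum_ind1 j : \sum_(k < n) ((k == j)%:R : R) = 1.
Proof. exact: (sum_ind xpredT). Qed.

Lemma exists_wardrop : exists f, wardrop f.
Proof.
have n0 : (0 < n)%N by rewrite lt0n size_eq0.
pose i0 := Ordinal n0.
have A0 : (@simplex R n) !=set0.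
  exists (\row_i ((i == i0)%:R)); split.
    by move=> i; rewrite mxE ler0n.
  under eq_bigr do rewrite mxE; exact: sum_ind1.
have cP : {within @simplex R n, continuous Phi} by apply: continuous_subspaceT; exact: Phi_cont.
have [v vA vmin] := EVT_min_rV A0 (@simplex_compact R n) cP.
exists (flow v); have fv := flow_feasible vA; split => // p pP fp r rP.
rewrite leNgt; apply/negP => hlt.
set f := flow v in fv fp hlt *.
have hi : (index p P < n)%N by rewrite index_mem.
have hj : (index r P < n)%N by rewrite index_mem.
pose i := Ordinal hi; pose j := Ordinal hj.
have pi : nth [::] P i = p by rewrite nth_index.
have rj : nth [::] P j = r by rewrite nth_index.
have vi : v ord0 i = f p by rewrite -[in RHS]pi /f flow_nth.
have ij : i != j.
  apply/negP => /eqP eij; have epr : p = r by rewrite -pi -rj eij.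
  by move: hlt; rewrite epr ltxx.
have pcL : forall q, q \in P -> pc f q = \sum_(e : E) (e \in q)%:R * ce C phi e (L e v).
  move=> q qP; rewrite pcE (uniq_sum _ (P_uniq_edges qP)); apply: eq_bigr => e _.
  by rewrite ef_flow.
pose D := pc f p - pc f r.
have D0 : 0 < D by rewrite subr_gt0.
pose NE := (#|E|%:R : R).
pose eta := D / (NE + 1).
have NE1 : 0 < NE + 1 by rewrite ltr_wpDl ?ler0n.
have eta0 : 0 < eta by rewrite divr_gt0.
have etaNE : NE * eta < D.
  have : eta * (NE + 1) = D by rewrite /eta divfK // gt_eqF.
  lra.
have hd : forall se : 'I_m * E, exists d, 0 < d /\ forall y, 0 <= y ->
    `|y - L se.2 v| < d -> `|C se.1 se.2 y - C se.1 se.2 (L se.2 v)| < eta.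
  move=> [s e]; have /andP[x0 _] := L01 e vA.
  by have [d d0 hd] := cont_eps (@hcont s e) x0 eta0; exists d.
have [dfun hdf] := boolp.choice hd.
pose dmin := \big[Num.min/1]_(se : 'I_m * E) dfun se.
have dmin0 : 0 < dmin.
  rewrite /dmin; apply: (big_ind (fun x => 0 < x)) => //.
    by move=> x y x0 y0; rewrite lt_min x0 y0.
  by move=> se _; case: (hdf se).
have dminle : forall se, dmin <= dfun se.
  by move=> se; rewrite /dmin (bigD1 se) //= ge_min lexx.
pose eps := Num.min (v ord0 i) (dmin / 2).
have fp0 : 0 < v ord0 i by rewrite vi.
have eps0 : 0 < eps by rewrite lt_min fp0 divr_gt0.
have epsv : eps <= v ord0 i by rewrite ge_min lexx.
have epsd : eps < dmin.
  apply: le_lt_trans (_ : dmin / 2 < dmin); first by rewrite ge_min lexx orbT.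
  by rewrite ltr_pdivrMr // ltr_pMr // ltr1n.
pose w := \row_k (v ord0 k + eps * ((k == j)%:R - (k == i)%:R)) : 'rV[R]_n.
have [vA0 vA1] : (forall k, 0 <= v ord0 k) /\ \sum_(k < n) v ord0 k = 1.
  by move: vA; rewrite inE.
have wA : w \in @simplex R n.
  rewrite inE; split.
    move=> k; rewrite mxE; case: (eqVneq k i) => [->|ki].
      rewrite (negbTE ij) /= mulr0n mulr1n; lra.
    rewrite /= mulr0n subr0; apply: addr_ge0; first exact: vA0.
    by apply: mulr_ge0; [exact: ltW | exact: ler0n].
  under eq_bigr do rewrite mxE.
  rewrite big_split /= -big_distrr /= sumrB !sum_ind1 vA1 subrr mulr0 addr0 //.
have Lw : forall e, L e w = L e v + eps * ((e \in r)%:R - (e \in p)%:R).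
  move=> e; rewrite /L; under eq_bigr do rewrite mxE.
  rewrite big_split /= -big_distrr /= sumrB.
  by rewrite (sum_ind (fun k => e \in nth [::] P k)) (sum_ind (fun k => e \in nth [::] P k)) rj pi.
have Phi_le : Phi v <= Phi w by apply: vmin.
have Phi_diff : Phi w - Phi v <= \sum_(e : E) ce C phi e (L e w) * (L e w - L e v).
  rewrite /Phi -sumrB; apply: ler_sum => e _; apply: Gh_diff; [exact: L01 | exact: L01].
pose del e := ((e \in r)%:R - (e \in p)%:R : R).
have del1 : forall e, `|del e| <= 1.
  by move=> e; rewrite /del; case: (e \in r); case: (e \in p);
    rewrite ?subrr ?normr0 ?ler01 ?subr0 ?normr1 ?sub0r ?normrN ?normr1.
have S1 : \sum_(e : E) ce C phi e (L e v) * del e = - D.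
  rewrite /D (pcL p pP) (pcL r rP) opprB -sumrB; apply: eq_bigr => e _.
  by rewrite /del mulrBr ![ce _ _ _ _ * _]mulrC.
have S2 : \sum_(e : E) (ce C phi e (L e w) - ce C phi e (L e v)) * del e <= NE * eta.
  apply: le_trans (_ : _ <= \sum_(e : E) eta) _.
    apply: ler_sum => e _.
    have ha : `|ce C phi e (L e w) - ce C phi e (L e v)| <= eta.
      rewrite /ce -sumrB; apply: le_trans (ler_norm_sum _ _ _) _.
      apply: le_trans (_ : _ <= \sum_(s < m) phi s * eta) _.
        apply: ler_sum => s _; rewrite -mulrBr normrM (ger0_norm (phi_ge0 s)).
        apply: ler_wpM2l; first exact: phi_ge0.
        apply: ltW; have [_ hds] := hdf (s, e); apply: hds.
          by have /andP[] := L01 e wA.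
        rewrite Lw addrAC subrr add0r normrM (gtr0_norm eps0).
        apply: le_lt_trans (_ : eps * 1 < _); last by rewrite mulr1; exact: lt_le_trans epsd (dminle _).
        by apply: ler_wpM2l; [exact: ltW | exact: del1].
      by rewrite -big_distrl /= (proj2 hphi) mul1r.
    apply: le_trans (ler_norm _) _; rewrite normrM.
    apply: le_trans (ler_wpM2l (normr_ge0 _) (del1 e)) _; rewrite mulr1; exact: ha.
  by rewrite sumr_const -mulr_natl /NE; apply: lexx.
have S : \sum_(e : E) ce C phi e (L e w) * del e < 0.
  have -> : \sum_(e : E) ce C phi e (L e w) * del e =
     \sum_(e : E) ce C phi e (L e v) * del e +
     \sum_(e : E) (ce C phi e (L e w) - ce C phi e (L e v)) * del e.
    by rewrite -big_split; apply: eq_bigr => e _ /=; ring.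
  rewrite S1; lra.
have : Phi w - Phi v < 0.
  apply: le_lt_trans Phi_diff _.
  have -> : \sum_(e : E) ce C phi e (L e w) * (L e w - L e v) =
            eps * \sum_(e : E) ce C phi e (L e w) * del e.
    rewrite big_distrr; apply: eq_bigr => e _ /=; rewrite Lw /del; ring.
  by rewrite pmulr_rlt0.
lra.
Qed.

End Exist.
Unset Implicit Arguments.
Theorem lemma2 (V E : finType) (src dst : E -> V) (vo vd : V)
  (R : realType) (m : nat) (C : 'I_m -> E -> R -> R)
  (hP : Paths src dst vo vd != [::])
  (hcont : forall s e, {within [set x : R | 0 <= x], continuous (C s e : R -> R)})
  (hincr : forall s e (x y : R), 0 <= x -> x < y -> C s e x < C s e y)
  (hpos : forall s e (x : R), 0 <= x -> 0 <= C s e x)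
  (phi : 'I_m -> R) (hphi : in_simplex phi) :
  (exists f, wardrop src dst vo vd C phi f /\
     forall p, used_route src dst vo vd C phi p -> 0 < f p) /\
  (forall f, wardrop src dst vo vd C phi f ->
     forall p, p \in Paths src dst vo vd ->
       (used_route src dst vo vd C phi p <->
        forall e, e \in p -> 0 < edge_flow src dst vo vd f e)).
Proof.
have [f0 wf0] := exists_wardrop hP hcont hincr hpos hphi.
split; last first.
  move=> f wf p pP; split.
    move=> [_ [h [wh hp]]] e ep; rewrite (ef_uniq hincr hphi wf wh).
    exact: lt_le_trans hp (ef_ge_path (proj1 wh) pP ep).
  move=> hp; split => //; case: (ltrP 0 (f p)) => fp; first by exists f.
  have fp0 : f p = 0 by apply/le_anti; rewrite fp (proj1 (proj1 wf)).
  have [mu [h1 h2]] := wardrop_min wf.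
  have [g [wg gp]] := decomp hincr hpos hphi wf h1 h2 pP hp fp0.
  by exists g.
have hch : forall q, exists h, wardrop src dst vo vd C phi h /\
    (used_route src dst vo vd C phi q -> 0 < h q).
  move=> q; case: (pselect (used_route src dst vo vd C phi q)) => [[_ [h [wh hq]]]|nu].
    by exists h.
  by exists f0; split.
have [H hH] := boolp.choice hch.
set P := Paths src dst vo vd in hP hch hH *.
have n0 : (0 < size P)%N by rewrite lt0n size_eq0.
pose k := (size P)%:R : R.
have k0 : 0 < k by rewrite /k ltr0n.
pose g q := (\sum_(r <- P) H r q) / k.
have efH : forall r e, edge_flow src dst vo vd (H r) e = edge_flow src dst vo vd f0 e.
  by move=> r e; apply: (ef_uniq hincr hphi (hH r).1 wf0).
have efg : forall e, edge_flow src dst vo vd g e = edge_flow src dst vo vd f0 e.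
  move=> e; rewrite /edge_flow /g -mulr_suml exchange_big /=.
  transitivity ((\sum_(r <- P) edge_flow src dst vo vd f0 e) / k).
    by congr (_ / _); apply: eq_bigr => r _; rewrite -(efH r).
  by rewrite sum_const_seq -/k mulrC mulKf // gt_eqF.
have Hge0 : forall r q, q \in P -> 0 <= H r q.
  by move=> r q qP; have [[[h0 _] _] _] := hH r; exact: h0.
have pcg : forall r q, path_cost src dst vo vd C phi (H r) q = path_cost src dst vo vd C phi g q.
  by move=> r q; apply: pc_ext => e; rewrite efH efg.
exists g; split.
  split.
    split.
      move=> q qP; rewrite /g; apply: divr_ge0; last exact: ltW.
      by apply: sumr_ge0 => r _; exact: Hge0.
    rewrite /g -mulr_suml exchange_big /=.
    transitivity ((\sum_(r <- P) (1 : R)) / k).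
      by congr (_ / _); apply: eq_bigr => r _; have [[[_ ->] _] _] := hH r.
    by rewrite sum_const_seq mulr1 divff // gt_eqF.
  move=> q qP gq r rP.
  have : exists2 r', r' \in P & 0 < H r' q.
    apply/not_exists2P => hn; move: gq; apply/negP; rewrite -leNgt /g.
    apply: mulr_le0_ge0; last by rewrite invr_ge0 ltW.
    rewrite big_seq; apply: sumr_le0 => r' r'P; rewrite leNgt; apply/negP => hr.
    by case: (hn r'); [|apply/negP]; rewrite ?r'P // hr.
  move=> [r' _ hr']; rewrite -!(pcg r'); have [[_ hw] _] := hH r'; exact: hw.
move=> p hu; have pP := hu.1.
have hp := (hH p).2 hu.
rewrite /g divr_gt0 // (bigD1_seq p) //=; last exact: P_uniq.
apply: ltr_pwDl => //; rewrite big_seq_cond; apply: sumr_ge0 => r _; exact: Hge0.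
Qed.
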